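(* Let $(R,\mathfrak m)$ be a noetherian local ring and $M$ an $R$-module. If $M$ admits a primary decomposition, then $\operatorname{Ass}_R(M)=\operatorname{Att}_R(D(M))$. If $M$ admits a secondary decomposition, then $\operatorname{Att}_R(M)=\operatorname{Ass}_R(D(M))$.
   Context: $E=E_R(R/\mathfrak m)$ denotes a fixed injective hull of $R/\mathfrak m$, and $D(\cdot)=\operatorname{Hom}_R(\cdot,E)$. A nonzero module $N$ is coprimary if for every $x\in R$ multiplication by $x$ on $N$ is injective or nilpotent; a submodule $U\subseteq M$ is primary if $M/U$ is coprimary; a primary decomposition of $M$ is a tuple $(U_1,\dots,U_s)$ of primary submodules with $U_1\cap\dots\cap U_s=0$. A nonzero module $N$ is secondary if for every $x\in R$ multiplication by $x$ on $N$ is surjective or nilpotent; a secondary decomposition of $M$ is a tuple $(U_1,\dots,U_s)$ of secondary submodules with $U_1+\dots+U_s=M$. For an arbitrary $R$-module $N$: $\operatorname{Ass}_R(N)$ is the set of primes $\mathfrak p$ with $\mathfrak p=\operatorname{Ann}_R(n)$ for some $n\in N$; $\operatorname{Att}_R(N)$ is the set of primes $\mathfrak p$ with $\mathfrak p=\operatorname{Ann}_R(N/U)$ for some submodule $U\subseteq N$. *)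

(* Defs.v *)
From HB Require Import structures.
From mathcomp Require Import all_boot all_order all_algebra.
From mathcomp Require Import boolp classical_sets functions.
Set Implicit Arguments. Unset Strict Implicit. Unset Printing Implicit Defensive.
Import GRing.Theory.
Local Open Scope ring_scope.

Definition is_ideal (R : comNzRingType) (I : R -> Prop) : Prop :=
  I 0 /\ (forall a b, I a -> I b -> I (a + b)) /\ (forall r a, I a -> I (r * a)).

Definition is_prime_ideal (R : comNzRingType) (P : R -> Prop) : Prop :=
  is_ideal P /\ ~ P 1 /\ (forall a b, P (a * b) -> P a \/ P b).

Definition noetherian_ring (R : comNzRingType) : Prop :=
  forall I : nat -> R -> Prop, (forall n, is_ideal (I n)) ->
    (forall n r, I n r -> I n.+1 r) ->
    exists N, forall n, (N <= n)%N -> forall r, I n r <-> I N r.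

Definition local_ring (R : comNzRingType) (m : R -> Prop) : Prop :=
  is_ideal m /\ ~ m 1 /\
  (forall I : R -> Prop, is_ideal I -> ~ I 1 -> forall r, I r -> m r).

Definition is_submod (R : comNzRingType) (V : lmodType R) (U : V -> Prop) : Prop :=
  U 0 /\ (forall x y, U x -> U y -> U (x + y)) /\ (forall r x, U x -> U (r *: x)).

Definition injective_module (R : comNzRingType) (E : lmodType R) : Prop :=
  forall (N N' : lmodType R) (i : {linear N -> N'}) (f : {linear N -> E}),
    injective i -> exists g : {linear N' -> E}, forall x, g (i x) = f x.

(* E is an injective hull of R/m: E is injective and contains an essential
   submodule R e isomorphic to R/m (i.e. Ann(e) = m). *)
Definition injective_hull_residue (R : comNzRingType) (m : R -> Prop)
  (E : lmodType R) : Prop :=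
  injective_module E /\
  exists e : E, (forall r, m r <-> r *: e = 0) /\
    (forall U : E -> Prop, is_submod U -> (exists x, U x /\ x <> 0) ->
       exists r, U (r *: e) /\ r *: e <> 0).

(* Matlis dual D(M) = Hom_R(M, E), realized as the submodule of R-linear
   maps inside the R-module of all functions M -> E. *)
Definition linear_fun (R : comNzRingType) (M E : lmodType R) (f : M -> E) : Prop :=
  (forall x y, f (x + y) = f x + f y) /\ (forall (r : R) x, f (r *: x) = r *: f x).

Definition DualMod (R : comNzRingType) (M E : lmodType R) : (M -> E) -> Prop :=
  @linear_fun R M E.

(* Associated / attached primes of the R-module N given as a submodule
   N of an ambient module V (N = whole V for an ordinary module). *)
Definition Ass (R : comNzRingType) (V : lmodType R) (N : V -> Prop)
  (p : R -> Prop) : Prop :=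
  is_prime_ideal p /\ exists n, N n /\ forall r, p r <-> r *: n = 0.

(* Ann_R(N/U) = { r | r N ⊆ U }. *)
Definition Att (R : comNzRingType) (V : lmodType R) (N : V -> Prop)
  (p : R -> Prop) : Prop :=
  is_prime_ideal p /\ exists U : V -> Prop, is_submod U /\ (forall x, U x -> N x) /\
    forall r, p r <-> (forall x, N x -> U (r *: x)).

(* U ⊆ M primary: M/U nonzero and each x acts injectively or nilpotently on M/U. *)
Definition primary_submod (R : comNzRingType) (M : lmodType R) (U : M -> Prop) : Prop :=
  is_submod U /\ (exists m, ~ U m) /\
  forall x : R, (forall m, U (x *: m) -> U m) \/ (exists n, forall m, U (x ^+ n *: m)).

Definition primary_decomposition (R : comNzRingType) (M : lmodType R) (s : nat)
  (U : 'I_s -> M -> Prop) : Prop :=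
  (forall i, primary_submod (U i)) /\ (forall m, (forall i, U i m) -> m = 0).

Definition secondary_submod (R : comNzRingType) (M : lmodType R) (U : M -> Prop) : Prop :=
  is_submod U /\ (exists u, U u /\ u <> 0) /\
  forall x : R, (forall u, U u -> exists v, U v /\ x *: v = u) \/
                (exists n, forall u, U u -> x ^+ n *: u = 0).

Definition secondary_decomposition (R : comNzRingType) (M : lmodType R) (s : nat)
  (U : 'I_s -> M -> Prop) : Prop :=
  (forall i, secondary_submod (U i)) /\
  (forall m, exists u : 'I_s -> M, (forall i, U i (u i)) /\ m = \sum_(i < s) u i).

(* Main.v *)
Require Import Defs.
From HB Require Import structures.
From mathcomp Require Import all_boot all_order all_algebra.
From mathcomp Require Import boolp classical_sets functions.
From mathcomp Require Import zify.
Set Implicit Arguments. Unset Strict Implicit.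
Local Open Scope ring_scope.
Import GRing.Theory.
Lemma submodN (R : comNzRingType) (V : lmodType R) (U : V -> Prop) :
  is_submod U -> forall x, U x -> U (- x).
Proof. by move=> [_ [_ hZ]] x Ux; rewrite -scaleN1r; apply: hZ. Qed.

Lemma submodB (R : comNzRingType) (V : lmodType R) (U : V -> Prop) :
  is_submod U -> forall x y, U x -> U y -> U (x - y).
Proof. move=> hU x y Ux Uy; case: (hU) => _ [hD _]; apply: hD => //; exact: submodN. Qed.

Section Sub.
Variables (R : comNzRingType) (M : lmodType R) (D : M -> Prop) (hD : is_submod D).

Definition sT_ (h : is_submod D) := {x : M | `[< D x >]}.
Local Notation sT := (sT_ hD).
HB.instance Definition _ := [Choice of sT by <:].

Lemma sTP (x : sT) : D (val x).
Proof. by case: x => /= v /asboolP. Qed.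
Let D0 : `[< D 0 >].
Proof. by apply/asboolP; case: hD. Qed.
Definition sT0 : sT := @exist M (fun z => `[< D z >]) 0 D0.
Let DD (x y : sT) : `[< D (val x + val y) >].
Proof. apply/asboolP; case: hD => _ [h _]; apply: h; exact: sTP. Qed.
Definition sTadd (x y : sT) : sT := @exist M (fun z => `[< D z >]) _ (DD x y).
Let DN (x : sT) : `[< D (- val x) >].
Proof. apply/asboolP; apply: submodN => //; exact: sTP. Qed.
Definition sTopp (x : sT) : sT := @exist M (fun z => `[< D z >]) _ (DN x).
Let DZ r (x : sT) : `[< D (r *: val x) >].
Proof. apply/asboolP; case: hD => _ [_ h]; apply: h; exact: sTP. Qed.
Definition sTscale r (x : sT) : sT := @exist M (fun z => `[< D z >]) _ (DZ r x).

Lemma sTaddA : associative sTadd.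
Proof. by move=> x y z; apply: val_inj; rewrite /= addrA. Qed.
Lemma sTaddC : commutative sTadd.
Proof. by move=> x y; apply: val_inj; rewrite /= addrC. Qed.
Lemma sTadd0 : left_id sT0 sTadd.
Proof. by move=> x; apply: val_inj; rewrite /= add0r. Qed.
Lemma sTaddN : left_inverse sT0 sTopp sTadd.
Proof. by move=> x; apply: val_inj; rewrite /= addNr. Qed.
HB.instance Definition _ := GRing.isZmodule.Build sT sTaddA sTaddC sTadd0 sTaddN.

Lemma sTscaleA a b v : sTscale a (sTscale b v) = sTscale (a * b) v.
Proof. by apply: val_inj; rewrite /= scalerA. Qed.
Lemma sTscale1 : left_id 1 sTscale.
Proof. by move=> x; apply: val_inj; rewrite /= scale1r. Qed.
Lemma sTscaleDr : right_distributive sTscale +%R.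
Proof. by move=> a x y; apply: val_inj; rewrite /= scalerDr. Qed.
Lemma sTscaleDl v : {morph sTscale^~ v: a b / a + b}.
Proof. by move=> a b; apply: val_inj; rewrite /= scalerDl. Qed.
HB.instance Definition _ := GRing.Zmodule_isLmodule.Build R sT sTscaleA sTscale1 sTscaleDr sTscaleDl.

Definition sTval (x : sT) : M := val x.
Lemma sTval_lin : linear sTval.
Proof. by move=> a x y. Qed.
HB.instance Definition _ := GRing.isLinear.Build R sT M _ sTval sTval_lin.
End Sub.
Section SubMap.
Variables (R : comNzRingType) (M E : lmodType R) (D : M -> Prop) (hD : is_submod D).
Variables (g : M -> E) (hgD : forall x y, D x -> D y -> g (x + y) = g x + g y)
  (hgZ : forall r x, D x -> g (r *: x) = r *: g x).
Definition sTmap_ (h1 : forall x y, D x -> D y -> g (x + y) = g x + g y)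
  (h2 : forall r x, D x -> g (r *: x) = r *: g x) (x : sT_ hD) : E := g (val x).
Local Notation sTmap := (sTmap_ hgD hgZ).
Lemma sTmap_lin : linear sTmap.
Proof.
move=> a x y; rewrite /sTmap_ /= hgD ?hgZ //; try exact: sTP.
by case: hD => _ [_ h]; apply: h; exact: sTP.
Qed.
HB.instance Definition _ := GRing.isLinear.Build R (sT_ hD) E _ sTmap sTmap_lin.
End SubMap.

Lemma ext_lin (R : comNzRingType) (E : lmodType R) (hinj : injective_module E)
  (M : lmodType R) (G : M -> E -> Prop)
  (GD : forall x y a b, G x a -> G y b -> G (x + y) (a + b))
  (GZ : forall r x a, G x a -> G (r *: x) (r *: a))
  (G0 : G 0 0) (Gf : forall e, G 0 e -> e = 0) :
  exists f : M -> E, linear_fun f /\ forall x e, G x e -> f x = e.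
Proof.
have Gu : forall x a b, G x a -> G x b -> a = b.
  move=> x a b Ga Gb; have := GD _ _ _ _ Ga (GZ (-1) _ _ Gb).
  rewrite !scaleN1r subrr => /Gf /eqP; rewrite subr_eq0 => /eqP //.
pose D x := exists e, G x e.
have hD : is_submod D.
  split; first by exists 0.
  split; first by move=> x y [a Ga] [b Gb]; exists (a + b); exact: GD.
  by move=> r x [a Ga]; exists (r *: a); exact: GZ.
have : forall x, exists e, D x -> G x e.
  move=> x; case: (pselect (D x)) => [[e Ge]|nD]; first by exists e.
  by exists 0.
case/choice => g hg.
have hgD : forall x y, D x -> D y -> g (x + y) = g x + g y.
  move=> x y Dx Dy; apply: (Gu (x + y)); first apply: hg.
  - by case: Dx => a Ga; case: Dy => b Gb; exists (a + b); apply: GD.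
  by apply: GD; apply: hg.
have hgZ : forall r x, D x -> g (r *: x) = r *: g x.
  move=> r x Dx; apply: (Gu (r *: x)); first apply: hg.
  - by case: Dx => a Ga; exists (r *: a); apply: GZ.
  by apply: GZ; apply: hg.
have [f hf] := hinj _ _ (@sTval _ _ _ hD) (sTmap_ hgD hgZ) (@val_inj _ _ _).
exists f; split.
  by split; [move=> x y; rewrite linearD | move=> r x; rewrite linearZ].
move=> x e Gx.
have Dx : `[< D x >] by apply/asboolP; exists e.
have := hf (@exist M (fun z => `[< D z >]) x Dx).
rewrite /sTmap_ /= => ->.
by apply: (Gu x) => //; apply: hg; exists e.
Qed.
Section Basics.
Variables (R : comNzRingType).

Lemma scalefE (M E : lmodType R) (f : M -> E) r x : (r *: f) x = r *: f x.
Proof. by []. Qed.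
Lemma addfE (M E : lmodType R) (f g : M -> E) x : (f + g) x = f x + g x.
Proof. by []. Qed.
Lemma oppfE (M E : lmodType R) (f : M -> E) x : (- f) x = - f x.
Proof. by []. Qed.
Lemma zerofE (M E : lmodType R) x : (0 : M -> E) x = 0.
Proof. by []. Qed.
Lemma subfE (M E : lmodType R) (f g : M -> E) x : (f - g) x = f x - g x.
Proof. by []. Qed.

Lemma lin0 (M E : lmodType R) (f : M -> E) : linear_fun f -> f 0 = 0.
Proof. by case=> _ hZ; rewrite -(scale0r (0 : M)) hZ scale0r. Qed.

Lemma linN (M E : lmodType R) (f : M -> E) : linear_fun f -> forall x, f (- x) = - f x.
Proof. by case=> _ hZ x; rewrite -scaleN1r hZ scaleN1r. Qed.

Lemma linB (M E : lmodType R) (f : M -> E) : linear_fun f -> forall x y, f (x - y) = f x - f y.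
Proof. by move=> hf x y; rewrite hf.1 linN. Qed.

Lemma linZf (M E : lmodType R) (f : M -> E) r : linear_fun f -> linear_fun (r *: f).
Proof.
case=> hD hZ; split=> [x y|s x]; rewrite !scalefE; first by rewrite hD scalerDr.
by rewrite hZ !scalerA mulrC.
Qed.

Lemma linDf (M E : lmodType R) (f g : M -> E) : linear_fun f -> linear_fun g -> linear_fun (f + g).
Proof.
case=> fD fZ [gD gZ]; split=> [x y|s x]; rewrite !addfE; first by rewrite fD gD addrACA.
by rewrite fZ gZ scalerDr.
Qed.

Lemma linBf (M E : lmodType R) (f g : M -> E) : linear_fun f -> linear_fun g -> linear_fun (f - g).
Proof.
move=> hf hg; apply: linDf => //; have -> : - g = (-1) *: g.
  by apply/funext => x; rewrite oppfE scalefE scaleN1r.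
exact: linZf.
Qed.

Lemma lin0f (M E : lmodType R) : linear_fun (0 : M -> E).
Proof. by split=> [x y|s x]; rewrite !zerofE ?addr0 ?scaler0. Qed.

Lemma prime_pow (p : R -> Prop) : is_prime_ideal p -> forall r n, p (r ^+ n) -> p r.
Proof.
case=> _ [p1 pm] r; elim=> [|n IH]; first by rewrite expr0.
by rewrite exprS => /pm [] // /IH.
Qed.

Lemma prime_prod (I : eqType) (p : R -> Prop) (F : I -> R) : is_prime_ideal p ->
  forall s, p (\prod_(i <- s) F i) -> exists2 i, i \in s & p (F i).
Proof.
case=> _ [p1 pm]; elim=> [|a s IH]; first by rewrite big_nil.
rewrite big_cons => /pm [h|/IH [i hi pi]]; first by exists a => //; rewrite inE eqxx.
by exists i => //; rewrite inE hi orbT.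
Qed.

Lemma submod_sum (M : lmodType R) (U : M -> Prop) : is_submod U ->
  forall (I : eqType) (s : seq I) (F : I -> M), (forall i, i \in s -> U (F i)) -> U (\sum_(i <- s) F i).
Proof.
move=> hU I; elim=> [|a s IH] F hF; first by rewrite big_nil; case: hU.
rewrite big_cons; case: hU => _ [hD _]; apply: hD; first by apply: hF; rewrite inE eqxx.
by apply: IH => i hi; apply: hF; rewrite inE hi orbT.
Qed.

End Basics.

Section Main.
Variables (R : comNzRingType) (m : R -> Prop) (E : lmodType R)
  (Hloc : local_ring m) (hinj : injective_module E) (e : E)
  (he : forall r, m r <-> r *: e = 0) (M : lmodType R).

Lemma e_neq0 : e != 0.
Proof. apply/eqP => e0; case: Hloc => _ [m1 _]; apply: m1; apply/he; by rewrite e0 scaler0. Qed.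

Lemma sep (U : M -> Prop) : is_submod U -> forall y, ~ U y ->
  exists f : M -> E, linear_fun f /\ (forall u, U u -> f u = 0) /\ f y <> 0.
Proof.
move=> hU y nUy; case: (hU) => U0 [UD UZ].
pose G x a := exists u r, U u /\ x = u + r *: y /\ a = r *: e.
have [] := @ext_lin R E hinj M G.
- move=> x x' a a' [u [r [Uu [-> ->]]]] [u' [r' [Uu' [-> ->]]]].
  exists (u + u'), (r + r'); split; first exact: UD.
  by split; rewrite scalerDl // addrACA.
- move=> s x a [u [r [Uu [-> ->]]]]; exists (s *: u), (s * r); split; first exact: UZ.
  by rewrite scalerDr !scalerA.
- by exists 0, 0; rewrite !scale0r addr0.
- move=> a [u [r [Uu [h0 ->]]]]; apply/he.
  have Ury : U (r *: y).
    have -> : r *: y = - u by apply/eqP; rewrite -addr_eq0 addrC -h0.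
    exact: submodN.
  case: Hloc => _ [_ hm]; apply: (hm (fun r => U (r *: y))) => //.
  + split; first by rewrite scale0r.
    split; first by move=> a1 b1 Ua Ub; rewrite scalerDl; apply: UD.
    by move=> c a1 Ua; rewrite -scalerA; apply: UZ.
  + by rewrite scale1r.
move=> f [lf hf]; exists f; split => //; split.
  by move=> u Uu; apply: hf; exists u, 0; rewrite !scale0r addr0.
rewrite (hf y e); first exact/eqP/e_neq0.
by exists 0, 1; rewrite add0r !scale1r.
Qed.

Lemma submod_lin : is_submod (@linear_fun R M E).
Proof.
split; first exact: lin0f.
by split; [move=> f g; apply: linDf | move=> r f; apply: linZf].
Qed.

Lemma part1a (p : R -> Prop) : Ass (fun _ : M => True) p -> Att (@DualMod R M E) p.
Proof.
case=> pp [n [_ hn]]; split => //.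
exists (fun f => linear_fun f /\ f n = 0); split.
  split; first by split; [exact: lin0f | ].
  split; first by move=> f g [lf fn] [lg gn]; split; [exact: linDf | rewrite addfE fn gn addr0].
  by move=> r f [lf fn]; split; [exact: linZf | rewrite scalefE fn scaler0].
split; first by move=> f [].
move=> r; split.
  move=> /hn rn f lf; split; first exact: linZf.
  by rewrite scalefE -lf.2 rn lin0.
move=> h; apply/hn; apply: contrapT => rn.
have h0 : is_submod (fun x : M => x = 0).
  split => //; split; first by move=> x y -> ->; rewrite addr0.
  by move=> s x ->; rewrite scaler0.
have [f [lf [_ fr]]] := sep h0 rn.
by have [_] := h f lf; rewrite scalefE -lf.2.
Qed.

Lemma part2b (p : R -> Prop) : Ass (@DualMod R M E) p -> Att (fun _ : M => True) p.
Proof.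
case=> pp [f [lf hf]]; split => //.
exists (fun x => f x = 0); split.
  split; first exact: lin0.
  split; first by move=> x y fx fy; rewrite lf.1 fx fy addr0.
  by move=> r x fx; rewrite lf.2 fx scaler0.
split => // r; rewrite hf; split.
  by move=> rf x _; rewrite lf.2 -scalefE rf.
by move=> h; apply/funext => x; rewrite scalefE zerofE -lf.2 h.
Qed.

Lemma part2a (s : nat) (V : 'I_s -> M -> Prop) : secondary_decomposition V ->
  forall p, Att (fun _ : M => True) p -> Ass (@DualMod R M E) p.
Proof.
case=> hsec hsum p [pp [U [hU [_ hp]]]].
case: (hU) => U0 [UD UZ].
pose J i r := forall u, V i u -> U (r *: u).
have [j hj] : exists j, forall r, J j r -> p r.
  apply: contrapT => hn.
  have : forall j, exists r, J j r /\ ~ p r.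
    move=> j; apply: contrapT => hj; apply: hn; exists j => r Jr.
    by apply: contrapT => npr; apply: hj; exists r.
  case/choice => rr hrr.
  have : p (\prod_(i <- index_enum 'I_s) rr i).
    apply/hp => x _; have [u [hu ->]] := hsum x.
    rewrite scaler_sumr; apply: submod_sum => // i _.
    rewrite (bigD1 i) //= mulrC -scalerA; apply: UZ.
    by apply: (hrr i).1.
  by move=> /(prime_prod pp) [i _ /(hrr i).2].
have [y [Vy nUy]] : exists y, V j y /\ ~ U y.
  apply: contrapT => hn; case: pp => _ [p1 _]; apply: p1; apply: hj => u Vu.
  by rewrite scale1r; apply: contrapT => nU; apply: hn; exists u.
have [f [lf [fU fy]]] := sep hU nUy.
split => //; exists f; split => // r; split.
  move=> /hp pr; apply/funext => x; rewrite scalefE zerofE -lf.2; apply: fU.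
  exact: pr.
move=> rf; apply: contrapT => npr.
have [_ [_ hsr]] := hsec j.
case: (hsr r) => [surj|[n nil]].
  have [v [Vv rv]] := surj y Vy; apply: fy.
  by rewrite -rv lf.2 -scalefE rf zerofE.
apply: npr; apply: (@prime_pow _ p pp r n); apply: hj => u Vu; by rewrite nil.
Qed.

Lemma split_lem (U : (M -> E) -> Prop) (hU : is_submod U) (s : nat)
  (W : 'I_s -> M -> Prop) (hW : forall i, is_submod (W i)) (r : R) :
  forall S : seq 'I_s,
  (forall i, i \in S -> forall g, linear_fun g -> (forall u, W i u -> g u = 0) -> U (r *: g)) ->
  forall f, linear_fun f -> (forall x, (forall i, i \in S -> W i x) -> f x = 0) -> U (r *: f).
Proof.
elim=> [|a S IH] hK f lf hf.
  have -> : f = 0 by apply/funext => x; apply: hf.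
  by rewrite scaler0; case: hU.
pose B x := forall i, i \in S -> W i x.
have hB : is_submod B.
  split; first by move=> i _; case: (hW i).
  split; first by move=> x y Bx By i iS; case: (hW i) => _ [h _]; apply: h; [apply: Bx|apply: By].
  by move=> c x Bx i iS; case: (hW i) => _ [_ h]; apply: h; apply: Bx.
case: (hW a) => Wa0 [WaD WaZ].
case: (hB) => B0 [BD BZ].
pose G x c := exists a' b, W a a' /\ B b /\ x = a' + b /\ c = f b.
have [] := @ext_lin R E hinj M G.
- move=> x y c d [a1 [b1 [Wa1 [Bb1 [-> ->]]]]] [a2 [b2 [Wa2 [Bb2 [-> ->]]]]].
  exists (a1 + a2), (b1 + b2); do 2 (split; first by [apply: WaD|apply: BD]).
  by rewrite addrACA lf.1.
- move=> c x d [a1 [b1 [Wa1 [Bb1 [-> ->]]]]].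
  exists (c *: a1), (c *: b1); do 2 (split; first by [apply: WaZ|apply: BZ]).
  by rewrite scalerDr lf.2.
- by exists 0, 0; rewrite addr0 lin0.
- move=> c [a1 [b1 [Wa1 [Bb1 [h0 ->]]]]].
  have -> : b1 = - a1 by apply/eqP; rewrite -addr_eq0 addrC -h0.
  apply: hf => i; rewrite inE => /orP [/eqP ->|iS]; first exact: submodN.
  have := Bb1 i iS; have -> : b1 = - a1 by apply/eqP; rewrite -addr_eq0 addrC -h0.
  by [].
move=> g [lg hg].
have -> : f = g + (f - g) by rewrite addrC subrK.
rewrite scalerDr; case: hU => _ [UD _]; apply: UD.
  apply: (hK a (mem_head _ _)) => // u Wu; apply: hg; exists u, 0.
  by rewrite addr0 lin0.
apply: IH.
- by move=> i iS; apply: hK; rewrite inE iS orbT.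
- exact: linBf.
move=> x Bx; rewrite subfE (hg x (f x)) ?subrr //; exists 0, x.
by rewrite add0r.
Qed.

Lemma surj_inj (W : M -> Prop) (hW : is_submod W) (r : R)
  (hr : forall x, W (r *: x) -> W x) (g : M -> E) (lg : linear_fun g)
  (gW : forall u, W u -> g u = 0) :
  exists h : M -> E, linear_fun h /\ (forall u, W u -> h u = 0) /\ r *: h = g.
Proof.
case: (hW) => W0 [WD WZ].
pose G x c := exists u m', W u /\ x = u + r *: m' /\ c = g m'.
have [] := @ext_lin R E hinj M G.
- move=> x y c d [u1 [m1 [W1 [-> ->]]]] [u2 [m2 [W2 [-> ->]]]].
  exists (u1 + u2), (m1 + m2); split; first exact: WD.
  by rewrite scalerDr addrACA lg.1.
- move=> c x d [u1 [m1 [W1 [-> ->]]]].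
  exists (c *: u1), (c *: m1); split; first exact: WZ.
  by rewrite scalerDr lg.2 !scalerA mulrC.
- by exists 0, 0; rewrite scaler0 addr0 lin0.
- move=> c [u1 [m1 [W1 [h0 ->]]]]; apply: gW; apply: hr.
  have -> : r *: m1 = - u1 by apply/eqP; rewrite -addr_eq0 addrC -h0.
  exact: submodN.
move=> h [lh hh]; exists h; split => //; split.
  by move=> u Wu; apply: hh; exists u, 0; rewrite scaler0 addr0 lin0.
apply/funext => x; rewrite scalefE -lh.2; apply: hh; exists 0, x.
by rewrite add0r.
Qed.

Lemma last_nz (r : R) : forall n (z : M), z <> 0 -> r ^+ n *: z = 0 ->
  exists k, r ^+ k *: z <> 0 /\ r *: (r ^+ k *: z) = 0.
Proof.
elim=> [|n IH] z z0; first by rewrite expr0 scale1r.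
case: (pselect (r *: z = 0)) => [rz|rz].
  by move=> _; exists 0%N; rewrite expr0 scale1r.
rewrite exprSr -scalerA => /(IH _ rz) [k [h1 h2]].
by exists k.+1; rewrite exprSr -scalerA.
Qed.

Lemma acc_lem (HR : noetherian_ring R) (N : M -> Prop) (hN : is_submod N) (p : R -> Prop)
  (nil : forall r, p r -> forall x, N x -> exists n, r ^+ n *: x = 0)
  (y0 : M) (Ny0 : N y0) (y0ne : y0 <> 0) :
  exists y, N y /\ y <> 0 /\ forall r, p r -> r *: y = 0.
Proof.
apply: contrapT => hn.
case: (hN) => N0 [ND NZ].
have : forall y, exists y', (N y /\ y <> 0) -> (N y' /\ y' <> 0 /\
   (forall a, a *: y = 0 -> a *: y' = 0) /\ exists a, a *: y' = 0 /\ a *: y <> 0).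
  move=> y; case: (pselect (N y /\ y <> 0)) => [[Ny yne]|]; last by move=> h; exists 0.
  have [r [pr ry]] : exists r, p r /\ r *: y <> 0.
    apply: contrapT => h; apply: hn; exists y; split => //; split => // r pr.
    by apply: contrapT => ry; apply: h; exists r.
  have [n rn] := nil r pr y Ny.
  have [k [h1 h2]] := last_nz yne rn.
  exists (r ^+ k *: y) => _; split; first exact: NZ.
  split => //; split; last by exists r.
  by move=> a ay; rewrite scalerA mulrC -scalerA ay scaler0.
case/choice => T hT.
pose ys n := iter n T y0.
have inv : forall n, N (ys n) /\ ys n <> 0.
  elim=> [|n [IH1 IH2]] //=.
  by have [h1 [h2 _]] := hT _ (conj IH1 IH2); split.
pose I n a := a *: ys n = 0.
have [] := HR I.
- move=> n; split; first by rewrite /I scale0r.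
  split; first by move=> a b; rewrite /I scalerDl => -> ->; rewrite addr0.
  by move=> c a; rewrite /I -scalerA => ->; rewrite scaler0.
- by move=> n a; have [_ [_ [h _]]] := hT _ (inv n); apply: h.
move=> K hK.
have [_ [_ [_ [a [h1 h2]]]]] := hT _ (inv K).
by apply: h2; apply/(hK K.+1 (leqnSn K) a).
Qed.

Lemma part1b (HR : noetherian_ring R) (s : nat) (W : 'I_s -> M -> Prop) :
  primary_decomposition W -> forall p, Att (@DualMod R M E) p -> Ass (fun _ : M => True) p.
Proof.
case=> hprim hdec p [pp [U [hU [UD hp]]]].
case: (hU) => U0 [UDD UZ].
have hW : forall i, is_submod (W i) := fun i => (hprim i).1.
pose Z (S : seq 'I_s) := forall x, (forall i, i \in S -> W i x) -> x = 0.
have ZE : Z (enum 'I_s) by move=> x hx; apply: hdec => i; apply: hx; rewrite mem_enum.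
pose P n := `[< exists S, size S = n /\ Z S >].
have exP : exists n, P n by exists (size (enum 'I_s)); apply/asboolP; exists (enum 'I_s).
case: (ex_minnP exP) => n /asboolP [S [sS ZS]] minS.
pose K i r := forall g, linear_fun g -> (forall u, W i u -> g u = 0) -> U (r *: g).
have pK : forall i r, p r -> K i r by move=> i r /hp pr g lg _; apply: pr.
have [j jS Kj] : exists2 j, j \in S & forall r, K j r -> p r.
  apply: contrapT => hn.
  have : forall j, exists r, j \in S -> K j r /\ ~ p r.
    move=> j; case: (pselect (j \in S)) => jS; last by exists 0.
    apply: contrapT => hj; apply: hn; exists j => // r Kr.
    by apply: contrapT => npr; apply: hj; exists r.
  case/choice => rr hrr.
  have : p (\prod_(i <- S) rr i).
    apply/hp => f lf; apply: (@split_lem U hU s W hW _ S) => //.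
    - move=> i iS g lg gW; rewrite (big_rem i iS) /= mulrC -scalerA; apply: UZ.
      exact: (hrr i iS).1.
    - by move=> x hx; rewrite (ZS x hx); apply: lin0.
  by move=> /(prime_prod pp) [i iS /(hrr i iS).2].
pose N x := forall i, i \in filter (predC1 j) S -> W i x.
have hN : is_submod N.
  split; first by move=> i _; case: (hW i).
  split; first by move=> x y Nx Ny i iS; case: (hW i) => _ [h _]; apply: h; [apply: Nx|apply: Ny].
  by move=> c x Nx i iS; case: (hW i) => _ [_ h]; apply: h; apply: Nx.
have NW : forall x, N x -> W j x -> x = 0.
  move=> x Nx Wx; apply: ZS => i iS; case: (eqVneq i j) => [->|ij] //.
  by apply: Nx; rewrite mem_filter /= ij iS.
have [y0 [Ny0 y0ne]] : exists y, N y /\ y <> 0.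
  apply: contrapT => hn.
  have : P (size (filter (predC1 j) S)).
    apply/asboolP; exists (filter (predC1 j) S); split => // x Nx.
    by apply: contrapT => x0; apply: hn; exists x.
  move=> /minS; rewrite -sS size_filter => h4.
  have h1 := count_predC (pred1 j) S.
  have h2 : (0 < count (pred1 j) S)%N by rewrite -has_count has_pred1.
  have h3 : count (predC1 j) S = count (predC (pred1 j)) S by apply: eq_count.
  rewrite h3 in h4; move: h1 h2 h4; set a := count _ _; set b := count _ _.
  move=> <- a0; have hb : (b < a + b)%N by rewrite -{1}(add0n b) ltn_add2r.
  by rewrite leqNgt hb.
have claimA : forall y r, N y -> y <> 0 -> r *: y = 0 -> p r.
  move=> y r Ny yne ry; have [_ [_ hpr]] := hprim j.
  case: (hpr r) => [hinjr|[k hk]].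
    exfalso; apply: yne; apply: NW => //; apply: hinjr; rewrite ry.
    by case: (hW j).
  apply: (@prime_pow _ p pp r k); apply: Kj => g lg gW.
  have -> : r ^+ k *: g = 0.
    by apply/funext => x; rewrite scalefE -lg.2 gW.
  by [].
have claimB : forall r, p r -> forall x, N x -> exists n, r ^+ n *: x = 0.
  move=> r pr x Nx; have [_ [_ hpr]] := hprim j.
  case: (hpr r) => [hinjr|[k hk]].
    exfalso; case: pp => _ [p1 _]; apply: p1; apply: Kj => g lg gW.
    have [h [lh [hW' rh]]] := surj_inj (hW j) hinjr lg gW.
    by rewrite scale1r -rh; apply: (pK j r pr h lh hW').
  exists k; apply: NW; last exact: hk.
  by case: hN => _ [_ h]; apply: h.
have [y [Ny [yne hy]]] := acc_lem HR hN claimB Ny0 y0ne.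
split => //; exists y; split => // r; split; first exact: hy.
exact: claimA.
Qed.
End Main.

Unset Implicit Arguments.

Theorem mainTheorem3 (R : comNzRingType) (m : R -> Prop) (E : lmodType R)
  (HR : noetherian_ring R) (Hloc : local_ring m)
  (HE : injective_hull_residue m E) (M : lmodType R) :
  ((exists (s : nat) (U : 'I_s -> M -> Prop), primary_decomposition U) ->
     forall p : R -> Prop,
       Ass (fun _ : M => True) p <-> Att (@DualMod R M E) p) /\
  ((exists (s : nat) (U : 'I_s -> M -> Prop), secondary_decomposition U) ->
     forall p : R -> Prop,
       Att (fun _ : M => True) p <-> Ass (@DualMod R M E) p).
Proof.
case: HE => hinj [e [he _]].
split.
  move=> [s [U hU]] p; split; first exact: (part1a Hloc hinj he).
  exact: (part1b hinj HR hU).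
move=> [s [U hU]] p; split; first exact: (part2a Hloc hinj he hU).
exact: part2b.
Qed.
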